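(* Let $\mu>0$, $\delta>0$, let $\gamma$ be a density matrix on $\mathbb{C}^\Lambda$ ($0\le\gamma\le1$) with density $\rho(x)=\gamma_{x,x}$, and let $\Omega=\{x\in\Lambda:\rho(x)<\delta\}$, $\Omega^c=\Lambda\setminus\Omega$. Then $$\mathrm{Tr}\{K_\mu\gamma\}\ \ge\ \mathrm{Tr}\{[P_\Omega^\perp K_\mu P_\Omega^\perp]_-\}-4d\,\delta^{1/2}\,|\partial\Omega|-\mu\sum_{x\in\Omega}\rho(x).$$
   Context: $\Lambda=\mathbb{Z}_L^d$ periodic lattice; $T_{x,y}=1$ if $|x-y|_1=1$, else $0$; $\Delta_{x,y}=T_{x,y}-2d\delta_{x,y}$; $K_\mu=-\Delta-\mu$; $[X]_-=\min\{X,0\}$ (so $\mathrm{Tr}[X]_-$ is the sum of negative eigenvalues). For $A\subseteq\Lambda$, $P_A$ is the orthogonal projection on $\mathbb{C}^\Lambda$ given by $(P_Af)(x)=f(x)$ for $x\in A$ and $0$ otherwise; $P_\Omega^\perp=1-P_\Omega=P_{\Omega^c}$. The boundary is $\partial\Omega=\{x\in\Omega:\mathrm{dist}_1(x,\Omega^c)=1\}$, where $\mathrm{dist}_1$ is the graph ($\ell^1$) distance on $\Lambda$; $|\partial\Omega|$ is its cardinality. *)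

(* Defs.v *)
(* Complex scalars: an arbitrary numClosedFieldType C
   (e.g. the complex numbers). *)
From HB Require Import structures.
From mathcomp Require Import all_boot all_order all_algebra.
Local Open Scope sesquilinear_scope.
Set Implicit Arguments. Unset Strict Implicit. Unset Printing Implicit Defensive.
Import Order.TTheory GRing.Theory Num.Theory.
Local Open Scope ring_scope.

(* The periodic lattice Lambda = (Z_L)^d. *)
Definition lattice (d L : nat) : finType := {ffun 'I_d -> 'I_L}.

Definition cdist (L : nat) (a b : 'I_L) : nat :=
  let k := (if (a <= b)%N then (b - a) else (a - b))%N in minn k (L - k).

Definition dist1 (d L : nat) (x y : lattice d L) : nat :=
  (\sum_(i < d) cdist (x i) (y i))%N.

Section Ops.
Variables (C : numClosedFieldType) (d L : nat).
Local Notation Lam := (lattice d L).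
Local Notation N := #|{: Lam}|.

Definition Tmx : 'M[C]_N :=
  \matrix_(i, j) (dist1 (enum_val i) (enum_val j) == 1%N)%:R.

Definition Lap : 'M[C]_N := Tmx - (2 * d)%:R%:M.

Definition Kmu (mu : C) : 'M[C]_N := - Lap - mu%:M.

Definition Pset (A : {set Lam}) : 'M[C]_N :=
  diag_mx (\row_i (enum_val i \in A)%:R).

Definition trneg (X : 'M[C]_N) : C :=
  \sum_i Num.min (spectral_diag X 0 i) 0.

Definition psd (A : 'M[C]_N) : Prop :=
  A \is hermsymmx /\ forall v : 'rV[C]_N, 0 <= (v *m A *m v ^t*) 0 0.

Definition density_matrix (g : 'M[C]_N) : Prop := psd g /\ psd (1%:M - g).

Definition dens (g : 'M[C]_N) (x : Lam) : C := g (enum_rank x) (enum_rank x).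

Definition bdry (O : {set Lam}) : {set Lam} :=
  [set x in O | [exists y, (y \notin O) && (dist1 x y == 1%N)]].

End Ops.

(* Main.v *)
Require Import Defs.
From HB Require Import structures.
From mathcomp Require Import all_boot all_order all_algebra ring zify.
Local Open Scope sesquilinear_scope.
Import Order.TTheory GRing.Theory Num.Theory.

Lemma cdist1_nat L (a b : nat) : a < L -> b < L ->
  minn (if a <= b then b - a else a - b)
    (L - (if a <= b then b - a else a - b)) = 1 ->
  b = (a + 1) %% L \/ b = (a + L - 1) %% L.
Proof.
move=> aL bL h.
have E1 : (a + 1) %% L = if a + 1 < L then a + 1 else 0.
  case: ifP => H; first by rewrite modn_small.
  have -> : a + 1 = L by lia.
  by rewrite modnn.
have E2 : (a + L - 1) %% L = if a == 0 then L - 1 else a - 1.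
  case: eqP => H.
    by rewrite H add0n modn_small //; lia.
  have -> : a + L - 1 = (a - 1) + L by lia.
  by rewrite modnDr modn_small //; lia.
rewrite E1 E2; move: h; case: ifP => /=; case: ifP => /=; case: eqP => /=; lia.
Qed.

Lemma cdist1 L (a b : 'I_L) : cdist a b = 1 ->
  nat_of_ord b = (a + 1) %% L \/ nat_of_ord b = (a + L - 1) %% L.
Proof. exact: cdist1_nat. Qed.

Lemma cdist_eq0 L (a b : 'I_L) : cdist a b = 0 -> a = b.
Proof.
rewrite /cdist => h; apply/val_inj => /=.
have := ltn_ord a; have := ltn_ord b; move: h.
case: ifP => /=; lia.
Qed.

Lemma dist1_one d L (x y : lattice d L) : dist1 x y = 1 ->
  exists k, cdist (x k) (y k) = 1 /\ forall k', k' != k -> y k' = x k'.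
Proof.
rewrite /dist1 => h.
case: (pickP (fun k => cdist (x k) (y k) != 0)) => [k Hk|H]; last first.
  move: h; rewrite (eq_bigr (fun _ => 0)) ?big1 // => k _.
  by have := H k => /= /negbFE/eqP.
rewrite /= in Hk; exists k; move: h; rewrite (bigD1 k) //= => h.
move: Hk h; set a := cdist (x k) (y k); set s := bigop _ _ _ => Hk h.
have h2 : s = 0 by lia.
split; first by lia.
move=> k' nk; apply/esym/cdist_eq0.
by move/eqP: h2; rewrite sum_nat_eq0 => /forallP/(_ k'); rewrite nk => /eqP.
Qed.

Lemma nbr_k_card d L (x : lattice d L) k :
  #|[set y : lattice d L | (cdist (x k) (y k) == 1) &&
      [forall k', (k' != k) ==> (y k' == x k')]]| <= 2.
Proof.
rewrite -(card_bool).
apply: (@leq_card_in _ _ (fun y : lattice d L => nat_of_ord (y k) == (x k + 1) %% L)).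
move=> y1 y2; rewrite !inE => /andP[/eqP c1 /forallP f1] /andP[/eqP c2 /forallP f2] e.
apply/ffunP => k'; case: (eqVneq k' k) => [->|nk]; last first.
  by move: (f1 k') (f2 k'); rewrite nk /= => /eqP -> /eqP ->.
apply/val_inj => /=.
have [h1|h1] := @cdist1 _ _ _ c1; have [h2|h2] := @cdist1 _ _ _ c2; rewrite h1 h2 //.
- by move: e; rewrite h1 h2 eqxx; case: eqP.
- by move: e; rewrite h1 h2 eqxx; case: eqP.
Qed.

Lemma deg_bound d L (x : lattice d L) : #|[set y | dist1 x y == 1]| <= 2 * d.
Proof.
set S := fun k => [set y : lattice d L | (cdist (x k) (y k) == 1) &&
      [forall k', (k' != k) ==> (y k' == x k')]].
apply: (@leq_trans (\sum_(k < d) #|S k|)); last first.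
  apply: (@leq_trans (\sum_(k < d) 2)); first by apply: leq_sum => k _; apply: nbr_k_card.
  by rewrite sum_nat_const card_ord mulnC.
rewrite -sum1_card big_mkcond /=.
rewrite (eq_bigr (fun k => \sum_y (if y \in S k then 1 else 0))); last first.
  by move=> k _; rewrite -sum1_card big_mkcond.
rewrite exchange_big /=; apply: leq_sum => y _.
case: ifP => //; rewrite inE => /eqP /dist1_one [k [c f]].
rewrite (bigD1 k) //= inE c eqxx /=.
have -> : [forall k', (k' != k) ==> (y k' == x k')].
  by apply/forallP => k'; apply/implyP => nk; rewrite f.
by [].
Qed.

Lemma cdistC L (a b : 'I_L) : cdist a b = cdist b a.
Proof. rewrite /cdist; case: ifP; case: ifP => //=; lia. Qed.

Lemma dist1C d L (x y : lattice d L) : dist1 x y = dist1 y x.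
Proof. by rewrite /dist1; apply: eq_bigr => k _; rewrite cdistC. Qed.

Local Open Scope ring_scope.

Section Main.
Variables (C : numClosedFieldType) (d L : nat).
Local Notation Lam := (lattice d L).
Local Notation N := #|{: Lam}|.

Lemma sum_lam (F : Lam -> C) : \sum_(y : Lam) F y = \sum_(i < N) F (enum_val i).
Proof. by rewrite -(big_enum_val (A:=Lam)). Qed.

Lemma deg_C (i : 'I_N) :
  \sum_(j < N) (dist1 (enum_val i) (enum_val j) == 1%N)%:R <= (2 * d)%:R :> C.
Proof.
rewrite -(sum_lam (fun y => (dist1 (enum_val i) y == 1%N)%:R)) -natr_sum ler_nat.
apply: leq_trans (@deg_bound d L (enum_val i)).
rewrite -sum1_card [X in (_ <= X)%N]big_mkcond /=; apply: leq_sum => y _.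
by rewrite inE; case: (_ == _).
Qed.

End Main.

Section M.
Variables (C : numClosedFieldType) (n : nat).

Lemma herm_entry (g : 'M[C]_n) i j : g \is hermsymmx -> g j i = (g i j)^*.
Proof.
rewrite is_hermitianmxE => /eqP E.
by rewrite {1}E !mxE /= expr0 mul1r.
Qed.

Lemma quadE (g : 'M[C]_n) (v : 'rV[C]_n) :
  (v *m g *m v ^t*) 0 0 = \sum_k \sum_l v 0 k * g k l * (v 0 l)^*.
Proof.
rewrite mxE exchange_big /=; apply: eq_bigr => l _.
rewrite !mxE mulr_suml; apply: eq_bigr => k _.
done.
Qed.

Lemma sum_delta_r (F : 'I_n -> C) i : \sum_l F l * (l == i)%:R = F i.
Proof.
rewrite (bigD1 i) //= eqxx mulr1 big1 ?addr0 // => l /negbTE ->.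
by rewrite mulr0.
Qed.

Lemma sum_delta_l (F : 'I_n -> C) i : \sum_l (l == i)%:R * F l = F i.
Proof. by rewrite -(sum_delta_r F i); apply: eq_bigr => l _; rewrite mulrC. Qed.

Lemma quad2 (g : 'M[C]_n) i j (a b : C) :
  (\row_k (a * (k == i)%:R + b * (k == j)%:R) *m g *m
     (\row_k (a * (k == i)%:R + b * (k == j)%:R)) ^t*) 0 0 =
  a * (g i i * a^* + g i j * b^*) + b * (g j i * a^* + g j j * b^*).
Proof.
set v := \row_k _; rewrite quadE.
have inner (c : C) k : \sum_l c * g k l * (v 0 l)^* =
    c * (g k i * a^* + g k j * b^*).
  rewrite /v; under eq_bigr do rewrite mxE rmorphD !rmorphM /= !conjC_nat mulrDr !mulrA.
  by rewrite big_split /= !sum_delta_r mulrDr !mulrA.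
rewrite (eq_bigr _ (fun k _ => inner (v 0 k) k)) /v.
under eq_bigr do rewrite mxE mulrDl.
under eq_bigr do rewrite ![_ * (_ == _)%:R]mulrC -!mulrA.
by rewrite big_split /= !sum_delta_l.
Qed.

Definition psdq (g : 'M[C]_n) := forall v : 'rV[C]_n, 0 <= (v *m g *m v ^t*) 0 0.

Lemma psd_diag (g : 'M[C]_n) i : psdq g -> 0 <= g i i.
Proof.
move=> H; have := H (\row_k (1 * (k == i)%:R + 0 * (k == i)%:R)).
by rewrite quad2 conjC1 conjC0 !mulr0 !mul0r !addr0 mul1r mulr1.
Qed.

Lemma psd_entry (g : 'M[C]_n) i j (t : C) : g \is hermsymmx -> psdq g ->
  0 < t -> t *+ 2 * `|g i j| <= g i i + t ^+ 2 * g j j.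
Proof.
move=> Hh Hq t0.
have gi := psd_diag _ i Hq; have gj := psd_diag _ j Hq.
have [x0|xn0] := eqVneq (g i j) 0.
  rewrite x0 normr0 mulr0; apply: addr_ge0 => //.
  by apply: mulr_ge0 => //; apply: exprn_ge0; apply: ltW.
set x := g i j; set m := `|x|.
have m0 : m != 0 by rewrite normr_eq0.
have tr : t^* = t by apply/CrealP; apply: gtr0_real.
have mr : m^* = m by apply/CrealP; apply: normr_real.
have xc : x^* = m ^+ 2 / x by rewrite /m normCK [x * _]mulrC mulfK.
have := Hq (\row_k (1 * (k == i)%:R + (- (t * x / m)) * (k == j)%:R)).
rewrite quad2 (herm_entry _ i j Hh) -/x.
rewrite !rmorphN !rmorphM /= !rmorphV ?unitfE //= tr mr xc conjC1.
have -> : 1 * (g i i * 1 + x * - (t * (m ^+ 2 / x) / m)) +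
    - (t * x / m) * (m ^+ 2 / x * 1 + g j j * - (t * (m ^+ 2 / x) / m))
    = g i i + t ^+ 2 * g j j - t *+ 2 * m.
  by field; rewrite m0 xn0.
by rewrite subr_ge0.
Qed.

Lemma min_le_mul (x c : C) : x \is Num.real -> 0 <= c -> c <= 1 ->
  Num.min x 0 <= x * c.
Proof.
move=> xr c0 c1; case/orP: xr => hx.
  by rewrite min_r // mulr_ge0.
rewrite min_l // -subr_ge0 -[X in _ - X]mulr1 -mulrBr.
rewrite -mulrNN; apply: mulr_ge0; first by rewrite oppr_ge0.
by rewrite opprB subr_ge0.
Qed.

Lemma conj_entry (P g : 'M[C]_n) i :
  (P *m g *m P ^t*) i i = (row i P *m g *m (row i P) ^t*) 0 0.
Proof.
rewrite !mxE; apply: eq_bigr => k _; rewrite !mxE.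
congr (_ * _); apply: eq_bigr => l _; rewrite !mxE //.
Qed.

Lemma trneg_le (A g : 'M[C]_n) : A \is hermsymmx -> psdq g -> psdq (1%:M - g) ->
  \sum_i Num.min (spectral_diag A 0 i) 0 <= \tr (A *m g).
Proof.
move=> Ah g0 g1.
set P := spectralmx A; set D := spectral_diag A.
have Pu : P \is unitarymx := spectral_unitarymx A.
have AE : A = P ^t* *m diag_mx D *m P.
  by rewrite -invmx_unitary //; apply/orthomx_spectralP/hermitian_normalmx.
have Dr : D \is a realmx := hermitian_spectral_diag_real Ah.
have -> : \tr (A *m g) = \sum_i D 0 i * (P *m g *m P ^t*) i i.
  rewrite AE -!mulmxA mxtrace_mulC -!mulmxA mul_diag_mx /mxtrace.
  by apply: eq_bigr => i _; rewrite mxE !mulmxA.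
apply: ler_sum => i _; apply: min_le_mul.
- by move/mxOverP: Dr; apply.
- by rewrite conj_entry; apply: g0.
- have := g1 (row i P); rewrite -conj_entry mulmxBr mulmxBl mulmx1.
  have /unitarymxP -> := Pu.
by rewrite [(1%:M - _) i i]mxE [(- (_ : 'M_n)) i i]mxE [1%:M i i]mxE eqxx mulr1n subr_ge0.
Qed.
End M.

Theorem lemma3p1 (C : numClosedFieldType) (d L : nat) (mu delta : C)
  (g : 'M[C]_#|{: lattice d L}|) :
  0 < mu -> 0 < delta -> density_matrix g ->
  let Omega := [set x : lattice d L | dens g x < delta] in
  \tr (@Kmu C d L mu *m g) >=
    trneg (@Pset C d L (~: Omega) *m @Kmu C d L mu *m @Pset C d L (~: Omega))
    - 4%:R * d%:R * sqrtC delta * (#|bdry Omega|)%:R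
    - mu * \sum_(x in Omega) dens g x.
Proof.
move=> mu0 de0 [[gh gq] [_ g1q]]; rewrite [is_true _]/=.
set Omega := [set x : lattice d L | dens g x < delta].
pose om := fun i : 'I_#|{: lattice d L}| => enum_val i \in Omega.
pose ad := fun i j : 'I_#|{: lattice d L}| => dist1 (enum_val i) (enum_val j) == 1%N.
pose K := Kmu d L mu.
pose P := Pset C (~: Omega).
pose c := (2 * d)%:R - mu.
have adC i j : ad i j = ad j i by rewrite /ad dist1C.
have hK i j : K i j = c *+ (i == j) - (ad i j)%:R.
  rewrite /K /Kmu /Lap /Tmx !mxE /c /ad; case: (i == j); rewrite ?mulr1n ?mulr0n; ring.
have hPXP (X : 'M[C]_#|{: lattice d L}|) i j :
    (P *m X *m P) i j = (~~ om i)%:R * X i j * (~~ om j)%:R.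
  by rewrite /P /Pset mul_diag_mx mul_mx_diag !mxE !in_setC.
have trE (X : 'M[C]_#|{: lattice d L}|) : \tr (X *m g) = \sum_i \sum_j X i j * g j i.
  by apply: eq_bigr => i _; rewrite mxE.
pose S := \sum_i \sum_j ((om i || om j) && ad i j)%:R * g j i.
pose D := \sum_i (om i)%:R * g i i.
have hI : \tr (K *m g) = \tr (P *m K *m P *m g) + c * D - S.
  rewrite !trE /D /S mulr_sumr -big_split -sumrB /=; apply: eq_bigr => i _.
  rewrite mulrA -(@sum_delta_l _ _ (fun j => c * (om i)%:R * g j i) i).
  rewrite -big_split -sumrB /=; apply: eq_bigr => j _.
  rewrite hPXP !hK.
  case: (eqVneq i j) => [<-|nij].
    rewrite ?eqxx /=; case: (om i); case: (ad i i); rewrite /= ?mulr1n ?mulr0n; ring.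
  rewrite /=.
  case: (om i); case: (om j); case: (ad i j); rewrite /= ?mulr1n ?mulr0n; ring.
have cr : c^* = c.
  by apply/CrealP; rewrite /c rpredB // ?realn //; apply: gtr0_real.
have hPKPh : (P *m K *m P) \is hermsymmx.
  rewrite is_hermitianmxE; apply/eqP/matrixP => i j.
  rewrite [RHS]mxE [X in _ * X]mxE [X in _ * X^*]mxE !hPXP !hK expr0 mul1r !rmorphM rmorphB rmorphMn /=.
  rewrite !conjC_nat !rmorphMn /= conjC1 cr (adC j i) (eq_sym j i).
  case: (om i); case: (om j); case: (i == j); rewrite /= ?mulr1n ?mulr0n; ring.
have hsp : trneg (P *m K *m P) <= \tr (P *m K *m P *m g).
  exact: (@trneg_le _ _ _ _ hPKPh gq g1q).
have g1 i : g i i <= 1.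
  have := @psd_diag _ _ _ i g1q.
  by rewrite [(1%:M - g) i i]mxE [(- (_ : 'M_ _)) i i]mxE [1%:M i i]mxE eqxx mulr1n subr_ge0.
have g0 i : 0 <= g i i by exact: (@psd_diag _ _ _ i gq).
have omlt i : om i -> g i i < delta.
  by rewrite /om inE /dens enum_valK.
pose s := sqrtC delta.
have s0 : 0 < s by rewrite /s sqrtC_gt0.
have s2 : s ^+ 2 = delta by rewrite /s sqrtCK.
have nC i j : `|g j i| = `|g i j| by rewrite (@herm_entry _ _ g i j gh) norm_conjC.
have hb1 i j : `|g j i| *+ 2 <= g i i + g j j.
  have := @psd_entry _ _ g j i 1 gh gq ltr01.
  by rewrite mulr_natl expr1n mul1r addrC.
have hb2 i j : om i -> `|g i j| *+ 2 <= s *+ 2.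
  move=> oi; have := @psd_entry _ _ g i j s gh gq s0.
  rewrite mulrnAl -mulrnAr => h.
  rewrite -(ler_pM2l s0); apply: le_trans h _.
  rewrite mulrnAr -expr2 /s sqrtCK mulr2n; apply: lerD; first exact: ltW (omlt _ oi).
  by apply: ler_piMr; [apply: ltW | apply: g1].
have hpt i j : ((om i || om j) && ad i j)%:R * `|g j i| *+ 2 <=
    (om i && om j && ad i j)%:R * (g i i + g j j) +
    ((om i && ~~ om j && ad i j)%:R + (~~ om i && om j && ad i j)%:R) * (s *+ 2).
  case E: (om i); case F: (om j); case: (ad i j);
    rewrite /= ?mulr1n ?mulr0n ?mul1r ?mul0r ?add0r ?addr0 ?mulr0n.
  all: try rewrite [0 * _]mul0r ?addr0 ?add0r ?[1 * _]mul1r ?mul0rn //.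
  - by rewrite mul1r nC; apply: hb2.
  - by rewrite mul1r; apply: hb2.
have Sreal : S \is Num.real.
  apply/CrealP.
  have -> : S^* = \sum_i \sum_j ((om i || om j) && ad i j)%:R * g i j.
    rewrite /S rmorph_sum; apply: eq_bigr => i _; rewrite rmorph_sum; apply: eq_bigr => j _.
    by rewrite rmorphM /= conjC_nat (@herm_entry _ _ g i j gh) conjCK.
  rewrite [LHS]exchange_big /=; apply: eq_bigr => i _; apply: eq_bigr => j _.
  by rewrite orbC adC.
have hS : `|S| *+ 2 <=
    \sum_i \sum_j (om i && om j && ad i j)%:R * (g i i + g j j) +
    \sum_i \sum_j ((om i && ~~ om j && ad i j)%:R + (~~ om i && om j && ad i j)%:R) * (s *+ 2).
  apply: (@le_trans _ _ ((\sum_i \sum_j ((om i || om j) && ad i j)%:R * `|g j i|) *+ 2)).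
    rewrite lerMn2r /=; apply: le_trans (ler_norm_sum _ _ _) _; apply: ler_sum => i _.
    apply: le_trans (ler_norm_sum _ _ _) _; apply: ler_sum => j _.
    by rewrite normrM normr_nat.
  rewrite -sumrMnl -big_split; apply: ler_sum => i _.
  rewrite -sumrMnl -big_split; apply: ler_sum => j _; exact: hpt.
have hA : \sum_i \sum_j (om i && om j && ad i j)%:R * (g i i + g j j) =
    (\sum_i \sum_j (om i && om j && ad i j)%:R * g i i) *+ 2.
  have -> : \sum_i \sum_j (om i && om j && ad i j)%:R * (g i i + g j j) =
      \sum_i \sum_j (om i && om j && ad i j)%:R * g i i +
      \sum_i \sum_j (om i && om j && ad i j)%:R * g j j.
    rewrite -big_split; apply: eq_bigr => i _; rewrite -big_split; apply: eq_bigr => j _.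
    exact: mulrDr.
  rewrite mulr2n; congr (_ + _); rewrite [RHS]exchange_big /=.
  apply: eq_bigr => i _; apply: eq_bigr => j _.
  by rewrite adC (andbC (om i)).
have hAb : \sum_i \sum_j (om i && om j && ad i j)%:R * g i i <= (2 * d)%:R * D.
  rewrite /D mulr_sumr; apply: ler_sum => i _.
  rewrite -mulr_suml.
  have hf : \sum_j (om i && om j && ad i j)%:R <= (om i)%:R * (2 * d)%:R :> C.
    case: (om i).
      rewrite mul1r; apply: (le_trans _ (deg_C C d L i)); apply: ler_sum => j _.
      by rewrite ler_nat /ad; case: (om j).
    by rewrite mul0r big1 // => j _; rewrite mulr0n.
  apply: le_trans (ler_wpM2r (g0 i) hf) _.
  by rewrite mulrCA mulrA.
have hBs : \sum_i \sum_j ((om i && ~~ om j && ad i j)%:R + (~~ om i && om j && ad i j)%:R) * (s *+ 2)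
    = (\sum_i \sum_j (om i && ~~ om j && ad i j)%:R) *+ 2 * (s *+ 2).
  have -> : \sum_i \sum_j ((om i && ~~ om j && ad i j)%:R + (~~ om i && om j && ad i j)%:R) * (s *+ 2)
      = (\sum_i \sum_j ((om i && ~~ om j && ad i j)%:R + (~~ om i && om j && ad i j)%:R)) * (s *+ 2).
    by rewrite mulr_suml; apply: eq_bigr => i _; rewrite mulr_suml.
  congr (_ * _); rewrite mulr2n.
  have -> : \sum_i \sum_j ((om i && ~~ om j && ad i j)%:R + (~~ om i && om j && ad i j)%:R) =
      \sum_i \sum_j (om i && ~~ om j && ad i j)%:R + \sum_i \sum_j (~~ om i && om j && ad i j)%:R :> C.
    by rewrite -big_split; apply: eq_bigr => i _; rewrite big_split.
  congr (_ + _); rewrite [RHS]exchange_big /=.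
  apply: eq_bigr => i _; apply: eq_bigr => j _.
  by rewrite adC (andbC (~~ om i)).
pose B : C := \sum_(i < #|{: lattice d L}|) (enum_val i \in bdry Omega)%:R.
have hh : \sum_i \sum_j (om i && ~~ om j && ad i j)%:R <= (2 * d)%:R * B.
  rewrite /B mulr_sumr; apply: ler_sum => i _.
  case Hb: (enum_val i \in bdry Omega).
    rewrite mulr1; apply: (le_trans _ (deg_C C d L i)); apply: ler_sum => j _.
    by rewrite ler_nat /ad; case: (om i); case: (om j).
  rewrite mulr0 big1 // => j _.
  case Hh: (om i && ~~ om j && ad i j); last by rewrite mulr0n.
  move/andP: Hh => [/andP [oi noj] aij].
  move: Hb; rewrite in_set (oi : enum_val i \in Omega) /=; move/negbT/existsPn/(_ (enum_val j)).
  by rewrite noj (aij : dist1 _ _ == 1%N).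
have hB : (#|bdry Omega|)%:R = B.
  rewrite /B -(sum_lam C d L (fun y => (y \in bdry Omega)%:R)) -natr_sum.
  congr _%:R; rewrite -sum1_card big_mkcond; apply: eq_bigr => y _.
  by case: (y \in _).
have hD : \sum_(x in Omega) dens g x = D.
  rewrite /D big_mkcond /= (sum_lam C d L (fun x => if x \in Omega then dens g x else 0)).
  apply: eq_bigr => i _; rewrite /dens enum_valK /om.
  by case: (enum_val i \in Omega); rewrite ?mulr1n ?mulr0n ?mul1r ?mul0r.
have hSb : S <= (2 * d)%:R * D + 4%:R * d%:R * s * B.
  apply: le_trans (real_ler_norm Sreal) _.
  rewrite -(@ler_pMn2r _ 2 (isT : (0 < 2)%N)); apply: le_trans hS _.
  rewrite hA hBs.
  have -> : ((2 * d)%:R * D + 4%:R * d%:R * s * B) *+ 2 =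
      ((2 * d)%:R * D) *+ 2 + ((2 * d)%:R * B) *+ 2 * (s *+ 2) by ring.
  apply: lerD; first by rewrite lerMn2r /=.
  apply: ler_wpM2r; first by rewrite mulrn_wge0 // ltW.
  by rewrite lerMn2r /=.
rewrite hB hD -/s -/K -/P hI.
rewrite -subr_ge0.
have -> : \tr (P *m K *m P *m g) + c * D - S - (trneg (P *m K *m P) - 4%:R * d%:R * s * B - mu * D)
    = (\tr (P *m K *m P *m g) - trneg (P *m K *m P)) + ((2 * d)%:R * D + 4%:R * d%:R * s * B - S).
  by rewrite /c; ring.
by apply: addr_ge0; rewrite subr_ge0.
Qed.
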